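(* Let $L\ge 2$ and consider the tandem network of $L$ queues on a ring described in the context, in which a client served at queue $i$ moves to queue $i+1 \bmod L$. Fix $\lambda>0$ and, for each $i$, let $\pi_i^\lambda$ be a stationary probability distribution of the isolated queue $i$ fed by a Poisson arrival process of rate $\lambda$. Suppose that for every $i\in\{0,\dots,L-1\}$ and every $z_i\in E_i$ the following partial balance equations hold: $$\sum_{z\in V_i^+(z_i)}\mu(z)\,p_i^-(z,z_i)\,\pi_i^\lambda(z)=\lambda\,\pi_i^\lambda(z_i),$$ $$\mu(z_i)\pi_i^\lambda(z_i)+\sum_{z\in V_i^0(z_i)}q_i^0(z_i,z)\,\pi_i^\lambda(z_i)=\sum_{z\in V_i^-(z_i)}\lambda\,p_i^+(z,z_i)\,\pi_i^\lambda(z)+\sum_{z\in V_i^0(z_i)}q_i^0(z,z_i)\,\pi_i^\lambda(z).$$ Then for every integer $N\ge 0$ such that $Z_N:=\sum_{(z_0,\dots,z_{L-1})\in\Omega_N}\prod_{i}\pi_i^\lambda(z_i)>0$, where $\Omega_N=\{(z_0,\dots,z_{L-1})\in\prod_i E_i:\ \sum_i n(z_i)=N\}$, the probability measure on $\Omega_N$ $$P(z_0,\dots,z_{L-1})=\frac{\prod_{i=0}^{L-1}\pi_i^\lambda(z_i)}{Z_N}$$ (i.e. the product measure $\prod_i\pi_i^\lambda$ conditioned on the total number of clients being $N$) is a stationary distribution of the network dynamics restricted to $\Omega_N$.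
   Context: Queues with stochastic service rates. Each queue $i\in\{0,\dots,L-1\}$ has a countable state space $E_i\subset\mathbb N\times\mathbb R_+$; a state $z=(n,\mu)$ records the number of clients $n=n(z)$ and the current service rate $\mu=\mu(z)$, with $\mu(z)=0$ whenever $n(z)=0$. Write $V_i^+(z)=\{z'\in E_i: n(z')=n(z)+1\}$, $V_i^-(z)=\{z'\in E_i:n(z')=n(z)-1\}$, $V_i^0(z)=\{z'\in E_i: n(z')=n(z)\}$. For each $i$ there are transition probabilities $p_i^+(z,\cdot)$ on $V_i^+(z)$ (for all $z$) and $p_i^-(z,\cdot)$ on $V_i^-(z)$ (for $n(z)\ge1$), each summing to $1$, and nonnegative internal rates $q_i^0(z,z')$, $z'\in V_i^0(z)$. The isolated queue $i$ with arrival rate $\lambda$ is the continuous-time Markov chain on $E_i$ with jump rates $q_i(z,z')=\lambda p_i^+(z,z')\mathbf 1_{z'\in V_i^+(z)}+\mu(z)p_i^-(z,z')\mathbf 1_{z'\in V_i^-(z)}+q_i^0(z,z')\mathbf 1_{z'\in V_i^0(z)}$. The network is the continuous-time Markov chain on $\prod_i E_i$ in which: (a) for each $i$ with $n(z_i)\ge1$, at rate $\mu(z_i)p_i^-(z_i,z')p_{i+1}^+(z_{i+1},z'')$ (indices mod $L$) the state changes by $z_i\to z'\in V_i^-(z_i)$ and simultaneously $z_{i+1}\to z''\in V_{i+1}^+(z_{i+1})$; (b) for each $i$, at rate $q_i^0(z_i,z')$ the state changes by $z_i\to z'\in V_i^0(z_i)$, other coordinates unchanged. Total jump rates out of each state are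 assumed finite. The total number of clients is conserved, so the dynamics preserves each $\Omega_N$. *)

(* Defs.v *)
From Stdlib Require Import Reals.
From Stdlib Require List.
From Stdlib Require Import ClassicalDescription.
From mathcomp Require Import ssreflect ssrfun ssrbool eqtype ssrnat seq fintype bigop.

Set Implicit Arguments.
Unset Strict Implicit.

Local Open Scope R_scope.

Definition lsum {T : Type} (f : T -> R) (l : list T) : R :=
  List.fold_right (fun x acc => f x + acc) 0 l.

(** Unconditional summation of a real family over a subset [S] of an
    arbitrary type: [has_sum S f s] means the net of finite partial sums
    (over finite duplicate-free subsets of [S]) converges to [s]. *)
Definition has_sum {T : Type} (S : T -> Prop) (f : T -> R) (s : R) : Prop :=
  forall eps, 0 < eps ->
    exists l0 : list T,
      List.NoDup l0 /\ (forall x, List.In x l0 -> S x) /\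
      forall l : list T, List.NoDup l -> (forall x, List.In x l -> S x) ->
        (forall x, List.In x l0 -> List.In x l) ->
        Rabs (lsum f l - s) < eps.

Definition ind (P : Prop) : R :=
  if excluded_middle_informative P then 1 else 0.

Definition countable_set {T : Type} (S : T -> Prop) : Prop :=
  exists f : T -> nat, forall x y, S x -> S y -> f x = f y -> x = y.

(** Stationarity (global balance) of [P] for the continuous-time Markov chain
    on the state set [S] with off-diagonal jump rates [q x y] (x -> y):
    for every state x, the total rate out of x is finite and
    sum_{y <> x} P y q(y,x) = P x * sum_{y <> x} q(x,y). *)
Definition stationary_on {T : Type} (S : T -> Prop) (q : T -> T -> R)
  (P : T -> R) : Prop :=
  forall x, S x ->
    exists out : R,
      has_sum (fun y => S y /\ y <> x) (fun y => q x y) out /\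
      has_sum (fun y => S y /\ y <> x) (fun y => P y * q y x) (P x * out).

Definition stationary_distribution {T : Type} (S : T -> Prop)
  (q : T -> T -> R) (P : T -> R) : Prop :=
  (forall x, S x -> 0 <= P x) /\ has_sum S P 1 /\ stationary_on S q P.

(** A queue state is z = (n, mu) : nat * R, n = z.1 clients, rate mu = z.2.
    [E i] is the state space of queue i (a subset of nat * R). *)
Section Model.
Variable L : nat.
Variable E : 'I_L -> nat * R -> Prop.

Definition Vplus (i : 'I_L) (z z' : nat * R) : Prop := E i z' /\ z'.1 = z.1.+1.
Definition Vminus (i : 'I_L) (z z' : nat * R) : Prop := E i z' /\ z'.1.+1 = z.1.
Definition Vzero (i : 'I_L) (z z' : nat * R) : Prop := E i z' /\ z'.1 = z.1.

Variables (pplus pminus q0 : 'I_L -> nat * R -> nat * R -> R).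

Definition q_iso (lam : R) (i : 'I_L) (z z' : nat * R) : R :=
  (if z'.1 == z.1.+1 then lam * pplus i z z' else 0) +
  (if z'.1.+1 == z.1 then z.2 * pminus i z z' else 0) +
  (if z'.1 == z.1 then q0 i z z' else 0).

Definition net_state := 'I_L -> nat * R.

Definition q_net (x y : net_state) : R :=
  \big[Rplus/0]_(i < L)
    (ind (forall j, j <> i -> j <> ordS i -> y j = x j) *
     (if ((y i).1.+1 == (x i).1) && ((y (ordS i)).1 == (x (ordS i)).1.+1)
      then (x i).2 * pminus i (x i) (y i) * pplus (ordS i) (x (ordS i)) (y (ordS i))
      else 0))
  + \big[Rplus/0]_(i < L)
    (ind (forall j, j <> i -> y j = x j) *
     (if (y i).1 == (x i).1 then q0 i (x i) (y i) else 0)).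

Definition Omega (N : nat) (x : net_state) : Prop :=
  (forall i, E i (x i)) /\ (\sum_(i < L) (x i).1)%N = N.

Definition prod_measure (pi : 'I_L -> nat * R -> R) (x : net_state) : R :=
  \big[Rmult/1]_(i < L) pi i (x i).

End Model.

(* Main.v *)
From Pilot Require Import Defs.
From Stdlib Require Import Reals.
From mathcomp Require Import ssreflect ssrfun ssrbool eqtype ssrnat seq fintype bigop.
From HB Require Import structures.
From Stdlib Require Import Lra Psatz FunctionalExtensionality.
From Stdlib Require Import ClassicalDescription ClassicalEpsilon.
From Stdlib Require List Permutation.
From mathcomp Require Import div.

Local Open Scope R_scope.


Module HS.
Arguments lsum {T} f l : simpl never.
Import List Permutation.

Section S.
Context {T : Type}.

Lemma lsum_nil (f : T -> R) : lsum f nil = 0.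
Proof. by []. Qed.
Lemma lsum_cons (f : T -> R) x l : lsum f (x :: l) = f x + lsum f l.
Proof. by []. Qed.

Lemma lsum_app (f : T -> R) l1 l2 : lsum f (l1 ++ l2) = lsum f l1 + lsum f l2.
Proof. elim: l1 => [|x l IH] /=; first by rewrite lsum_nil; lra. rewrite !lsum_cons IH; lra. Qed.

Lemma lsum_perm (f : T -> R) l l' : Permutation l l' -> lsum f l = lsum f l'.
Proof. elim => //= [x l1 l2 _ IH| x y l1 | l1 l2 l3 _ H1 _ H2]; rewrite ?lsum_cons.
- rewrite IH; lra.
- lra.
- rewrite H1 H2 //.
Qed.

Lemma lsum_ext (f g : T -> R) l : (forall x, In x l -> f x = g x) -> lsum f l = lsum g l.
Proof. elim: l => //= x l IH H. rewrite !lsum_cons H; last by left. rewrite IH //. move=> y Hy; apply H; by right. Qed.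

Lemma lsum_nonneg (f : T -> R) l : (forall x, In x l -> 0 <= f x) -> 0 <= lsum f l.
Proof. elim: l => [|x l IH] H; rewrite ?lsum_nil ?lsum_cons; [lra|].
have := H x (or_introl erefl). have := IH (fun y Hy => H y (or_intror Hy)). lra. Qed.

Lemma lsum_scale c (f : T -> R) l : lsum (fun x => c * f x) l = c * lsum f l.
Proof. elim: l => [|x l IH]; rewrite ?lsum_nil ?lsum_cons; [lra|]. rewrite IH; lra. Qed.

Lemma lsum_add (f g : T -> R) l : lsum (fun x => f x + g x) l = lsum f l + lsum g l.
Proof. elim: l => [|x l IH]; rewrite ?lsum_nil ?lsum_cons; [lra|]. rewrite IH; lra. Qed.

Definition dec (P : Prop) : bool := if excluded_middle_informative P then true else false.
Lemma decP (P : Prop) : dec P = true <-> P.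
Proof. rewrite /dec; case: excluded_middle_informative => //. Qed.

Definition cfilter (P : T -> Prop) l := filter (fun x => dec (P x)) l.
Lemma In_cfilter P l x : In x (cfilter P l) <-> In x l /\ P x.
Proof. rewrite /cfilter filter_In decP //. Qed.
Lemma NoDup_cfilter P l : NoDup l -> NoDup (cfilter P l).
Proof. apply: NoDup_filter. Qed.

Lemma lsum_cfilter (f : T -> R) P l : (forall x, In x l -> ~ P x -> f x = 0) ->
  lsum f (cfilter P l) = lsum f l.
Proof. elim: l => //= x l IH H. rewrite /cfilter /=. case E: (dec (P x)).
- rewrite !lsum_cons -/(cfilter P l) IH // => y Hy; apply H; by right.
- rewrite lsum_cons -/(cfilter P l) IH; last by move=> y Hy; apply H; right.
  rewrite H; [lra|by left|]. move=> Hp; move/decP: Hp; by rewrite E.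
Qed.

Definition lunion l1 l2 := l1 ++ cfilter (fun x => ~ In x l1) l2.
Lemma In_lunion l1 l2 x : In x (lunion l1 l2) <-> In x l1 \/ In x l2.
Proof. rewrite /lunion in_app_iff In_cfilter. split; [tauto|]. case=> H; [tauto|].
case: (classic (In x l1)); tauto. Qed.
Lemma NoDup_lunion {l1 l2} : NoDup l1 -> NoDup l2 -> NoDup (lunion l1 l2).
Proof. move=> H1 H2; apply NoDup_app => //; first exact: NoDup_cfilter.
move=> a Ha /In_cfilter [] //. Qed.

Lemma lsum_incl (f : T -> R) l1 l2 : NoDup l1 -> NoDup l2 -> incl l1 l2 ->
  (forall x, In x l2 -> 0 <= f x) -> lsum f l1 <= lsum f l2.
Proof. move=> N1 N2 I Hf.
have P : Permutation l2 (lunion l1 l2).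
  apply NoDup_Permutation => //; first exact: NoDup_lunion.
  move=> x; rewrite In_lunion; split; [tauto|case=> //; apply I].
rewrite (@lsum_perm f _ _ P) /lunion lsum_app.
have : 0 <= lsum f (cfilter (fun x => ~ In x l1) l2).
  apply lsum_nonneg => x /In_cfilter [] H _; exact: Hf.
lra. Qed.

Fixpoint cdedup (l : list T) : list T := match l with nil => nil | x :: r =>
  if excluded_middle_informative (In x r) then cdedup r else x :: cdedup r end.
Lemma In_cdedup l x : In x (cdedup l) <-> In x l.
Proof. elim: l => //= y l IH. case: excluded_middle_informative => H /=; rewrite IH.
- split; [tauto|case=> // <-; done].
- tauto. Qed.
Lemma NoDup_cdedup l : NoDup (cdedup l).
Proof. elim: l => /= [|y l IH]; first constructor.
case: excluded_middle_informative => H //. constructor => //. by rewrite In_cdedup. Qed.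

End S.


Lemma NoDup_map_in {A B : Type} (f : A -> B) l : NoDup l ->
  (forall x y, In x l -> In y l -> f x = f y -> x = y) -> NoDup (map f l).
Proof. elim: l => /= [|a l IH] N H; first constructor.
inversion N; subst. constructor.
- move=> /in_map_iff [y [E Hy]]. have := H y a (or_intror Hy) (or_introl erefl) E.
  move=> ?; subst; done.
- apply IH => // x y Hx Hy; apply H; by right. Qed.

Lemma NoDup_prod {A B : Type} (l1 : list A) (l2 : list B) : NoDup l1 -> NoDup l2 ->
  NoDup (list_prod l1 l2).
Proof. elim: l1 => /= [|a l IH] N1 N2; first constructor.
inversion N1; subst. apply NoDup_app.
- apply NoDup_map_in => // x y _ _ [] //.
- exact: IH.
- move=> p /in_map_iff [b [<- _]] /in_prod_iff [] //.
Qed.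

Lemma lsum_prod {A B : Type} (f : A -> R) (g : B -> R) l1 l2 :
  lsum (fun p => f p.1 * g p.2) (list_prod l1 l2) = lsum f l1 * lsum g l2.
Proof. elim: l1 => /= [|a l IH]; rewrite ?lsum_nil; first lra.
rewrite lsum_app IH lsum_cons.
have -> : lsum (fun p : A * B => f p.1 * g p.2) (map (fun y => (a, y)) l2) = f a * lsum g l2.
  clear IH; elim: l2 => /= [|b l2 IH2]; rewrite ?lsum_nil ?lsum_cons; [lra|]. rewrite IH2 /=; lra.
lra. Qed.

Lemma lsum_map {A B : Type} (f : B -> R) (g : A -> B) l : lsum f (map g l) = lsum (fun x => f (g x)) l.
Proof. elim: l => //= a l IH; by rewrite !lsum_cons IH. Qed.

Section HasSum.
Context {T : Type}.
Implicit Types (S : T -> Prop) (f g : T -> R).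

Lemma hs_le {S f s l} : has_sum S f s -> (forall x, S x -> 0 <= f x) ->
  NoDup l -> (forall x, In x l -> S x) -> lsum f l <= s.
Proof. move=> H Hf N Hl. apply: Rnot_lt_le => Hlt.
have [l0 [N0 [S0 H0]]] := H (lsum f l - s) ltac:(lra).
have := H0 (lunion l l0) (NoDup_lunion N N0).
have Hin : forall x, In x (lunion l l0) -> S x by move=> x /In_lunion [] ?; auto.
move=> /(_ Hin (fun x Hx => proj2 (In_lunion _ _ _) (or_intror Hx))).
have : lsum f l <= lsum f (lunion l l0).
  apply lsum_incl => //; first exact: NoDup_lunion.
  by move=> x Hx; apply In_lunion; left. by move=> x /Hin; apply Hf.
move=> ? /Rabs_def2 []; lra. Qed.

Lemma hs_ge0 {S f s} : has_sum S f s -> (forall x, S x -> 0 <= f x) -> 0 <= s.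
Proof. move=> H Hf. have := @hs_le S f s nil H Hf (NoDup_nil _) (fun x (h : In x nil) => match h with end). done. Qed.

Lemma hs_sup {S f s} : (forall x, S x -> 0 <= f x) ->
  (forall l, NoDup l -> (forall x, In x l -> S x) -> lsum f l <= s) ->
  (forall eps, 0 < eps -> exists l, NoDup l /\ (forall x, In x l -> S x) /\ s - eps < lsum f l) ->
  has_sum S f s.
Proof. move=> Hf Hu Hl eps He. have [l0 [N0 [S0 L0]]] := Hl eps He.
exists l0; split => //; split => // l N Sl I.
have := Hu l N Sl. have : lsum f l0 <= lsum f l.
  apply lsum_incl => // x /Sl; apply Hf.
move=> ? ?; apply Rabs_def1; lra. Qed.

Lemma hs_unique {S f a b} : has_sum S f a -> has_sum S f b -> a = b.
Proof. move=> Ha Hb. apply: Rle_antisym; apply: Rnot_lt_le => Hlt.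
- have [l1 [N1 [S1 H1]]] := Ha ((a - b)/2) ltac:(lra).
  have [l2 [N2 [S2 H2]]] := Hb ((a - b)/2) ltac:(lra).
  have Hn := NoDup_lunion N1 N2.
  have Hs : forall x, In x (lunion l1 l2) -> S x by move=> x /In_lunion [] ?; auto.
  have := H1 _ Hn Hs (fun x Hx => proj2 (In_lunion _ _ _) (or_introl Hx)).
  have := H2 _ Hn Hs (fun x Hx => proj2 (In_lunion _ _ _) (or_intror Hx)).
  move=> /Rabs_def2 [? ?] /Rabs_def2 [? ?]; lra.
- have [l1 [N1 [S1 H1]]] := Ha ((b - a)/2) ltac:(lra).
  have [l2 [N2 [S2 H2]]] := Hb ((b - a)/2) ltac:(lra).
  have Hn := NoDup_lunion N1 N2.
  have Hs : forall x, In x (lunion l1 l2) -> S x by move=> x /In_lunion [] ?; auto.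
  have := H1 _ Hn Hs (fun x Hx => proj2 (In_lunion _ _ _) (or_introl Hx)).
  have := H2 _ Hn Hs (fun x Hx => proj2 (In_lunion _ _ _) (or_intror Hx)).
  move=> /Rabs_def2 [? ?] /Rabs_def2 [? ?]; lra.
Qed.

Lemma hs_ext {S S' f g s} : (forall x, S x <-> S' x) -> (forall x, S x -> f x = g x) ->
  has_sum S f s -> has_sum S' g s.
Proof. move=> HS Hfg H eps He. have [l0 [N0 [S0 H0]]] := H eps He.
exists l0; split => //; split; first by move=> x /S0 /HS.
move=> l N Sl I. rewrite -(@lsum_ext _ f g); last by move=> x /Sl /HS /Hfg.
apply H0 => // x /Sl /HS //. Qed.

Lemma hs_add {S f g a b} : has_sum S f a -> has_sum S g b ->
  has_sum S (fun x => f x + g x) (a + b).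
Proof. move=> Ha Hb eps He.
have [l1 [N1 [S1 H1]]] := Ha (eps/2) ltac:(lra).
have [l2 [N2 [S2 H2]]] := Hb (eps/2) ltac:(lra).
exists (lunion l1 l2); split; first exact: NoDup_lunion.
split; first by move=> x /In_lunion [] ?; auto.
move=> l N Sl I. rewrite lsum_add.
have := H1 l N Sl (fun x Hx => I x (proj2 (In_lunion _ _ _) (or_introl Hx))).
have := H2 l N Sl (fun x Hx => I x (proj2 (In_lunion _ _ _) (or_intror Hx))).
move=> /Rabs_def2 [? ?] /Rabs_def2 [? ?]; apply Rabs_def1; lra. Qed.

Lemma hs_scale {S f a c} : has_sum S f a -> has_sum S (fun x => c * f x) (c * a).
Proof. move=> Ha eps He.
have Hc : 0 < Rabs c + 1 by have := Rabs_pos c; lra.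
have [l1 [N1 [S1 H1]]] := Ha (eps / (Rabs c + 1)) ltac:(apply Rdiv_lt_0_compat; lra).
exists l1; split => //; split => // l N Sl I. rewrite lsum_scale.
have := H1 l N Sl I. move=> H.
rewrite -Rmult_minus_distr_l Rabs_mult.
apply: (Rle_lt_trans _ ((Rabs c + 1) * Rabs (lsum f l - a))).
  apply Rmult_le_compat_r; [apply Rabs_pos|lra].
have -> : eps = (Rabs c + 1) * (eps / (Rabs c + 1)) by field; lra.
apply Rmult_lt_compat_l => //. Qed.

Lemma hs_zero {S f} : (forall x, S x -> f x = 0) -> has_sum S f 0.
Proof. move=> H eps He. exists nil; split; first constructor; split => // l N Sl _.
rewrite (@lsum_ext _ f (fun _ => 0)); last by move=> x /Sl /H.
have -> : lsum (fun _ : T => 0) l = 0 by elim: l {N Sl} => //= x l IH; rewrite lsum_cons IH; lra.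
rewrite Rminus_0_r Rabs_R0 //. Qed.

Lemma hs_restrict {S S' f s} : (forall x, S' x -> S x) -> (forall x, S x -> ~ S' x -> f x = 0) ->
  has_sum S' f s -> has_sum S f s.
Proof. move=> Hsub H0 H eps He. have [l0 [N0 [S0 L0]]] := H eps He.
exists l0; split => //; split; first by move=> x /S0 /Hsub.
move=> l N Sl I. rewrite -(@lsum_cfilter _ f S'); last by move=> x /Sl; apply H0.
apply L0; first exact: NoDup_cfilter.
- by move=> x /In_cfilter [].
- move=> x Hx. apply In_cfilter; split; [exact: I|exact: S0]. Qed.

Lemma hs_remove {S f s x0} : S x0 -> has_sum S f s ->
  has_sum (fun x => S x /\ x <> x0) f (s - f x0).
Proof. move=> Hx0 H eps He. have [l0 [N0 [S0 L0]]] := H eps He.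
exists (cfilter (fun x => x <> x0) l0); split; first exact: NoDup_cfilter.
split; first by move=> x /In_cfilter [] /S0.
move=> l N Sl I.
have N' : NoDup (x0 :: l) by constructor => // /Sl [] _ [].
have := L0 (x0 :: l) N'.
have -> : lsum f (x0 :: l) - s = lsum f l - (s - f x0) by rewrite lsum_cons; ring.
apply. by move=> x [<-|/Sl []].
move=> x Hx. case: (classic (x = x0)) => [->|ne]; [by left|right].
apply I; apply In_cfilter; done. Qed.

End HasSum.

Lemma hs_bij {A B : Type} (SA : A -> Prop) (SB : B -> Prop) (phi : A -> B) (psi : B -> A)
  (g : B -> R) s :
  (forall a, SA a -> SB (phi a)) -> (forall a, SA a -> psi (phi a) = a) ->
  (forall b, SB b -> SA (psi b) /\ phi (psi b) = b) ->
  has_sum SA (fun a => g (phi a)) s -> has_sum SB g s.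
Proof. move=> H1 H2 H3 H eps He. have [l0 [N0 [S0 L0]]] := H eps He.
exists (map phi l0); split.
  apply NoDup_map_in => // x y /S0 Hx /S0 Hy E.
  by rewrite -(H2 x Hx) -(H2 y Hy) E.
split; first by move=> b /in_map_iff [a [<- /S0]]; apply H1.
move=> l N Sl I.
have Hl : l = map phi (map psi l).
  rewrite map_map. elim: l {N I} Sl => //= b l IH Sl.
  rewrite -IH; last by move=> x Hx; apply Sl; right.
  by rewrite (proj2 (H3 b (Sl b (or_introl erefl)))).
rewrite Hl lsum_map. apply L0.
- apply NoDup_map_in => // x y /Sl Hx /Sl Hy E.
  by rewrite -(proj2 (H3 x Hx)) -(proj2 (H3 y Hy)) E.
- by move=> a /in_map_iff [b [<- /Sl /H3 []]].
- move=> a Ha. apply in_map_iff; exists (phi a); split.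
  by apply H2; apply S0. apply I; apply in_map_iff; by exists a.
Qed.

Lemma hs_prod {A B : Type} {SA : A -> Prop} {SB : B -> Prop} {f g a b} :
  (forall x, SA x -> 0 <= f x) -> (forall y, SB y -> 0 <= g y) ->
  has_sum SA f a -> has_sum SB g b ->
  has_sum (fun p => SA p.1 /\ SB p.2) (fun p => f p.1 * g p.2) (a * b).
Proof. move=> Hf Hg Ha Hb.
have a0 := hs_ge0 Ha Hf. have b0 := hs_ge0 Hb Hg.
apply hs_sup.
- move=> p [? ?]; apply Rmult_le_pos; auto.
- move=> l N Sl.
  set l1 := cdedup (map fst l). set l2 := cdedup (map snd l).
  have S1 : forall x, In x l1 -> SA x.
    by move=> x /In_cdedup /in_map_iff [p [<- /Sl []]].
  have S2 : forall y, In y l2 -> SB y.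
    by move=> x /In_cdedup /in_map_iff [p [<- /Sl []]].
  apply: (Rle_trans _ (lsum (fun p => f p.1 * g p.2) (list_prod l1 l2))).
    apply lsum_incl => //. apply NoDup_prod; apply NoDup_cdedup.
    move=> [x y] Hp. apply in_prod; apply In_cdedup; apply in_map_iff; by exists (x, y).
    move=> [x y] /in_prod_iff [/S1 ? /S2 ?]; apply Rmult_le_pos; auto.
  rewrite lsum_prod. apply Rmult_le_compat.
    apply lsum_nonneg => x /S1; auto. apply lsum_nonneg => x /S2; auto.
    apply: (hs_le Ha Hf) => //; apply NoDup_cdedup.
    apply: (hs_le Hb Hg) => //; apply NoDup_cdedup.
- move=> eps He. set d := eps / (a + b + 1).
  have Hd : 0 < d by apply Rdiv_lt_0_compat; lra.
  have [l1 [N1 [S1 H1]]] := Ha d Hd. have [l2 [N2 [S2 H2]]] := Hb d Hd.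
  exists (list_prod l1 l2); split; first exact: NoDup_prod.
  split; first by move=> [x y] /in_prod_iff [/S1 ? /S2 ?].
  rewrite lsum_prod.
  have /Rabs_def2 [A1 A2] := H1 l1 N1 S1 (fun x h => h).
  have /Rabs_def2 [B1 B2] := H2 l2 N2 S2 (fun x h => h).
  have ub1 := hs_le Ha Hf N1 S1. have ub2 := hs_le Hb Hg N2 S2.
  have p1 : 0 <= lsum f l1 by apply lsum_nonneg => x /S1; auto.
  have p2 : 0 <= lsum g l2 by apply lsum_nonneg => x /S2; auto.
  have Hed : eps = (a + b + 1) * d by rewrite /d; field; lra.
  move: A1 A2 B1 B2 ub1 ub2 p1 p2; move: (lsum f l1) (lsum g l2) => x y A1 A2 B1 B2 ub1 ub2 p1 p2.
  have E1 : a * b - x * y = a * (b - y) + y * (a - x) by ring.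
  have E2 : a * (b - y) <= a * d by apply Rmult_le_compat_l; lra.
  have E3 : y * (a - x) <= b * d.
    apply: (Rle_trans _ (y * d)). apply Rmult_le_compat_l; lra.
    apply Rmult_le_compat_r; lra.
  nra.
Qed.

Lemma hs_bigsum {I T : Type} (S : T -> Prop) (s : list I) (F : I -> T -> R) (a : I -> R) :
  (forall i, has_sum S (F i) (a i)) ->
  has_sum S (fun y => \big[Rplus/0]_(i <- s) F i y) (\big[Rplus/0]_(i <- s) a i).
Proof. move=> H. elim: s => [|i s IH].
- rewrite big_nil. apply hs_zero => x _; by rewrite big_nil.
- rewrite big_cons. apply: hs_ext (hs_add (H i) IH) => // x _. by rewrite big_cons.
Qed.

End HS.
Import HS.
Notation ind := Pilot.Defs.ind.

HB.instance Definition _ := Monoid.isComLaw.Build R 0 Rplus (fun x y z => esym (Rplus_assoc x y z)) Rplus_comm Rplus_0_l.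
HB.instance Definition _ := Monoid.isComLaw.Build R 1 Rmult (fun x y z => esym (Rmult_assoc x y z)) Rmult_comm Rmult_1_l.

Lemma ind_T (P : Prop) : P -> ind P = 1.
Proof. move=> H; unfold Defs.ind; destruct (ClassicalDescription.excluded_middle_informative P); [reflexivity|contradiction]. Qed.
Lemma ind_F (P : Prop) : ~ P -> ind P = 0.
Proof. move=> H; unfold Defs.ind; destruct (ClassicalDescription.excluded_middle_informative P); [contradiction|reflexivity]. Qed.

Lemma ordS_neq {L : nat} (HL : (2 <= L)%N) (i : 'I_L) : ordS i != i.
Proof. apply/eqP => /(f_equal val) /=. have Hi := ltn_ord i.
case: (ltngtP i.+1 L) => H.
- rewrite modn_small // => /eqP; by rewrite -[X in _ == X]addn0 -addn1 eqn_add2l.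
- by rewrite ltnNge Hi in H.
- rewrite H modnn => E. by move: HL; rewrite -H -E.
Qed.

Lemma sumR_scale {I : Type} (c : R) (s : list I) (F : I -> R) :
  c * \big[Rplus/0]_(i <- s) F i = \big[Rplus/0]_(i <- s) (c * F i).
Proof. elim: s => [|i s IH]; rewrite ?big_nil ?big_cons; [ring|]. rewrite -IH; ring. Qed.

Lemma fchoice {A B : Type} (P : A -> B -> Prop) : (forall a, exists b, P a b) -> exists f, forall a, P a (f a).
Proof. move=> H. exists (fun a => proj1_sig (constructive_indefinite_description _ (H a))).
move=> a; exact: proj2_sig. Qed.

Section Main.
Variable (L : nat) (HL : (2 <= L)%N)
  (E : 'I_L -> nat * R -> Prop)
  (HEmu : forall i z, E i z -> 0 <= z.2 /\ (z.1 = 0%N -> z.2 = 0))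
  (pplus pminus q0 : 'I_L -> nat * R -> nat * R -> R)
  (Hpplus : forall i z, E i z ->
     (forall z', Vplus E i z z' -> 0 <= pplus i z z') /\
     has_sum (Vplus E i z) (pplus i z) 1)
  (Hpminus : forall i z, E i z -> (1 <= z.1)%N ->
     (forall z', Vminus E i z z' -> 0 <= pminus i z z') /\
     has_sum (Vminus E i z) (pminus i z) 1)
  (Hq0 : forall i z z', E i z -> Vzero E i z z' -> 0 <= q0 i z z')
  (lam : R) (Hlam : 0 < lam)
  (pi : 'I_L -> nat * R -> R)
  (Hpi0 : forall i z, E i z -> 0 <= pi i z).

Definition Aterm (x y : net_state L) (i : 'I_L) : R :=
    (ind (forall j, j <> i -> j <> ordS i -> y j = x j) *
     (if ((y i).1.+1 == (x i).1) && ((y (ordS i)).1 == (x (ordS i)).1.+1)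
      then (x i).2 * pminus i (x i) (y i) * pplus (ordS i) (x (ordS i)) (y (ordS i))
      else 0)).
Definition Bterm (x y : net_state L) (i : 'I_L) : R :=
    (ind (forall j, j <> i -> y j = x j) *
     (if (y i).1 == (x i).1 then q0 i (x i) (y i) else 0)).

Lemma q_net_eq x y : q_net pplus pminus q0 x y =
  \big[Rplus/0]_(i < L) Aterm x y i + \big[Rplus/0]_(i < L) Bterm x y i.
Proof. by []. Qed.

Definition phi2 (x : net_state L) i (p : (nat * R) * (nat * R)) : net_state L :=
  fun j => if j == i then p.1 else if j == ordS i then p.2 else x j.
Definition upd (x : net_state L) i (a : nat * R) : net_state L :=
  fun j => if j == i then a else x j.

Lemma phi2_i x i p : phi2 x i p i = p.1.
Proof. by rewrite /phi2 eqxx. Qed.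
Lemma phi2_i' x i p : phi2 x i p (ordS i) = p.2.
Proof. by rewrite /phi2 (negbTE (ordS_neq HL i)) eqxx. Qed.
Lemma phi2_o x i p j : j <> i -> j <> ordS i -> phi2 x i p j = x j.
Proof. move=> /eqP/negbTE h1 /eqP/negbTE h2; by rewrite /phi2 h1 h2. Qed.
Lemma phi2_psi x i y : (forall j, j <> i -> j <> ordS i -> y j = x j) -> phi2 x i (y i, y (ordS i)) = y.
Proof. move=> H; apply functional_extensionality => j. rewrite /phi2.
case: (eqVneq j i) => [->//|/eqP h1]. case: (eqVneq j (ordS i)) => [->//|/eqP h2].
by rewrite H. Qed.
Lemma upd_i x i a : upd x i a i = a.
Proof. by rewrite /upd eqxx. Qed.
Lemma upd_o x i a j : j <> i -> upd x i a j = x j.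
Proof. move=> /eqP/negbTE h1; by rewrite /upd h1. Qed.
Lemma upd_psi x i y : (forall j, j <> i -> y j = x j) -> upd x i (y i) = y.
Proof. move=> H; apply functional_extensionality => j. rewrite /upd.
case: (eqVneq j i) => [->//|/eqP h1]. by rewrite H. Qed.

Lemma count2 (f g : 'I_L -> nat) i : (forall j, j <> i -> j <> ordS i -> f j = g j) ->
  (f i + f (ordS i) = g i + g (ordS i))%N -> (\sum_(j < L) f j = \sum_(j < L) g j)%N.
Proof. move=> H Hs. have hn := ordS_neq HL i.
rewrite (bigD1 i) // (bigD1 (ordS i)) //= [RHS](bigD1 i) // [in RHS](bigD1 (ordS i)) //=.
rewrite !addnA Hs. congr (_ + _)%N. apply eq_bigr => j /andP [/eqP h1 /eqP h2]. exact: H.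
Qed.

Lemma count1 (f g : 'I_L -> nat) i : (forall j, j <> i -> f j = g j) ->
  f i = g i -> (\sum_(j < L) f j = \sum_(j < L) g j)%N.
Proof. move=> H Hs. apply eq_bigr => j _. case: (eqVneq j i) => [->//|/eqP]; exact: H. Qed.

Definition Q1 (x : net_state L) i := \big[Rmult/1]_(j < L | j != i) pi j (x j).
Definition Q2 (x : net_state L) i := \big[Rmult/1]_(j < L | (j != i) && (j != ordS i)) pi j (x j).

Lemma prodQ1 x i : prod_measure pi x = pi i (x i) * Q1 x i.
Proof. by rewrite /prod_measure (bigD1 i). Qed.
Lemma Q1Q2 x i : Q1 x i = pi (ordS i) (x (ordS i)) * Q2 x i.
Proof. rewrite /Q1 (bigD1 (ordS i)) //=; exact: ordS_neq. Qed.
Lemma Q1S x i : Q1 x (ordS i) = pi i (x i) * Q2 x i.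
Proof. rewrite /Q1 (bigD1 i) /=; last by rewrite eq_sym ordS_neq.
congr (_ * _). apply eq_bigl => j. by rewrite andbC. Qed.
Lemma Q1_ext x y i : (forall j, j <> i -> y j = x j) -> Q1 y i = Q1 x i.
Proof. move=> H; apply eq_bigr => j /eqP hj; by rewrite H. Qed.
Lemma Q2_ext x y i : (forall j, j <> i -> j <> ordS i -> y j = x j) -> Q2 y i = Q2 x i.
Proof. move=> H; apply eq_bigr => j /andP [/eqP h1 /eqP h2]; by rewrite H. Qed.


Lemma out_A N (x : net_state L) i : Omega E N x ->
  has_sum (fun y => Omega E N y /\ y <> x) (fun y => Aterm x y i) (x i).2.
Proof. move=> [Ex Hsum]. have hn := ordS_neq HL i.
case: (eqVneq (x i).1 0%N) => [h0|hn0].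
- have m0 := proj2 (HEmu _ _ (Ex i)) h0. rewrite m0; apply hs_zero => y _; rewrite /Aterm m0.
  case: ifP => _; ring.
- have h1 : (1 <= (x i).1)%N by rewrite lt0n.
  have [Hmn Hm] := Hpminus _ _ (Ex i) h1. have [Hpn Hp] := Hpplus _ _ (Ex (ordS i)).
  have Hpr := hs_prod Hmn Hpn Hm Hp.
  have Hsc := hs_scale (c := (x i).2) Hpr.
  set T := fun y : net_state L => (forall j, j <> i -> j <> ordS i -> y j = x j) /\
     Vminus E i (x i) (y i) /\ Vplus E (ordS i) (x (ordS i)) (y (ordS i)).
  apply: (hs_restrict (S' := T)).
  + move=> y [Ho [[Ey1 Hy1] [Ey2 Hy2]]]. split; first split.
    * move=> j. case: (eqVneq j i) => [->//|/eqP h1'].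
      case: (eqVneq j (ordS i)) => [->//|/eqP h2']. rewrite Ho //.
    * rewrite -Hsum. apply: (@count2 _ _ i) => [j ? ?|]; first by rewrite Ho.
      rewrite Hy2 -Hy1. by rewrite addSn addnS.
    * move=> E'. move: Hy1; rewrite E' => /eqP. by rewrite -[X in _ == X]addn0 -addn1 eqn_add2l.
  + move=> y [[Ey _] _] HT. rewrite /Aterm.
    case: (classic (forall j, j <> i -> j <> ordS i -> y j = x j)) => Ho; last by rewrite ind_F //; ring.
    case: ifP => [/andP [/eqP c1 /eqP c2]|_]; last by ring.
    exfalso; apply HT; split => //; split; split => //.
  + have -> : (x i).2 = (x i).2 * (1 * 1) by ring.
    apply: (@hs_bij _ _ (fun p => Vminus E i (x i) p.1 /\ Vplus E (ordS i) (x (ordS i)) p.2) T (phi2 x i) (fun y => (y i, y (ordS i)))).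
    * move=> p [Hp1 Hp2]; split; [exact: phi2_o|]. by rewrite phi2_i phi2_i'.
    * by move=> [a b] _; rewrite phi2_i phi2_i'.
    * move=> y [Ho [H1 H2]]; split => //. exact: phi2_psi.
    * apply: (hs_ext _ _ Hsc) => // -[a b] [[Ea Ha] [Eb Hb]] /=.
      rewrite /Aterm phi2_i phi2_i' ind_T; last by move=> j ? ?; apply phi2_o.
      rewrite Ha Hb !eqxx /=. ring.
Qed.

Lemma out_B N (x : net_state L) i r : Omega E N x ->
  has_sum (Vzero E i (x i)) (q0 i (x i)) r ->
  has_sum (fun y => Omega E N y /\ y <> x) (fun y => Bterm x y i) (r - q0 i (x i) (x i)).
Proof. move=> [Ex Hsum] Hr.
have Hrm := hs_remove (x0 := x i) (conj (Ex i) erefl) Hr.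
set T := fun y : net_state L => (forall j, j <> i -> y j = x j) /\
     Vzero E i (x i) (y i) /\ y i <> x i.
apply: (hs_restrict (S' := T)).
- move=> y [Ho [[Ey1 Hy1] Hne]]. split; first split.
  + move=> j. case: (eqVneq j i) => [->//|/eqP h1']. rewrite Ho //.
  + rewrite -Hsum. apply: (@count1 _ _ i) => [j ?|]; first by rewrite Ho. done.
  + move=> E'; apply Hne; by rewrite E'.
- move=> y [[Ey _] Hne] HT. rewrite /Bterm.
  case: (classic (forall j, j <> i -> y j = x j)) => Ho; last by rewrite ind_F //; ring.
  case: ifP => [/eqP c1|_]; last by ring.
  exfalso; apply HT; split => //; split; first by split.
  move=> E'; apply Hne; apply functional_extensionality => j; case: (eqVneq j i) => [->//|/eqP hj]; exact: Ho.
- apply: (@hs_bij _ _ (fun a => Vzero E i (x i) a /\ a <> x i) T (upd x i) (fun y => y i)).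
  + move=> a [Ha Hne]; split; [move=> j; exact: upd_o|]. by rewrite upd_i.
  + by move=> a _; rewrite upd_i.
  + move=> y [Ho [H1 H2]]; split => //. exact: upd_psi.
  + apply: (hs_ext _ _ Hrm) => // a [[Ea Ha] Hne] /=.
    rewrite /Bterm upd_i ind_T; last by move=> j ?; apply upd_o.
    rewrite Ha !eqxx /=. ring.
Qed.

Lemma in_A N (x : net_state L) i Z s2 : Omega E N x -> 0 < Z ->
  has_sum (Vplus E i (x i)) (fun z => z.2 * pminus i z (x i) * pi i z) (lam * pi i (x i)) ->
  has_sum (Vminus E (ordS i) (x (ordS i)))
     (fun z => lam * pplus (ordS i) z (x (ordS i)) * pi (ordS i) z) s2 ->
  has_sum (fun y => Omega E N y /\ y <> x) (fun y => prod_measure pi y / Z * Aterm y x i)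
     (pi i (x i) * s2 * Q2 x i / Z).
Proof. move=> [Ex Hsum] HZ H1 H2. have hn := ordS_neq HL i.
have Hn1 : forall z, Vplus E i (x i) z -> 0 <= z.2 * pminus i z (x i) * pi i z.
  move=> z [Ez Hz]. apply Rmult_le_pos; last exact: Hpi0.
  apply Rmult_le_pos; first exact: (proj1 (HEmu _ _ Ez)).
  have h1 : (1 <= z.1)%N by rewrite Hz.
  apply (proj1 (Hpminus _ _ Ez h1)). split; [exact: Ex | by rewrite Hz].
have Hn2 : forall z, Vminus E (ordS i) (x (ordS i)) z ->
    0 <= lam * pplus (ordS i) z (x (ordS i)) * pi (ordS i) z.
  move=> z [Ez Hz]. apply Rmult_le_pos; last exact: Hpi0.
  apply Rmult_le_pos; first lra.
  apply (proj1 (Hpplus _ _ Ez)). split; [exact: Ex | by rewrite Hz].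
have Hpr := hs_prod Hn1 Hn2 H1 H2.
have Hsc := hs_scale (c := Q2 x i / (Z * lam)) Hpr.
set T := fun y : net_state L => (forall j, j <> i -> j <> ordS i -> y j = x j) /\
   Vplus E i (x i) (y i) /\ Vminus E (ordS i) (x (ordS i)) (y (ordS i)).
apply: (hs_restrict (S' := T)).
- move=> y [Ho [[Ey1 Hy1] [Ey2 Hy2]]]. split; first split.
  + move=> j. case: (eqVneq j i) => [->//|/eqP h1'].
    case: (eqVneq j (ordS i)) => [->//|/eqP h2']. rewrite Ho //.
  + rewrite -Hsum. apply: (@count2 _ _ i) => [j ? ?|]; first by rewrite Ho.
    rewrite Hy1 -Hy2. by rewrite addSn addnS.
  + move=> E'. move: Hy1; rewrite E' => /eqP. by rewrite -[X in X == _]addn0 -addn1 eqn_add2l.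
- move=> y [[Ey _] _] HT. rewrite /Aterm.
  case: (classic (forall j, j <> i -> j <> ordS i -> x j = y j)) => Ho; last by rewrite ind_F //; ring.
  case: ifP => [/andP [/eqP c1 /eqP c2]|_]; last by ring.
  exfalso; apply HT; split; first by move=> j ? ?; rewrite Ho.
  split; split => //.
- have -> : pi i (x i) * s2 * Q2 x i / Z = Q2 x i / (Z * lam) * (lam * pi i (x i) * s2).
    field; split; lra.
  apply: (@hs_bij _ _ (fun p => Vplus E i (x i) p.1 /\ Vminus E (ordS i) (x (ordS i)) p.2) T (phi2 x i) (fun y => (y i, y (ordS i)))).
  + move=> p [Hp1 Hp2]; split; [exact: phi2_o|]. by rewrite phi2_i phi2_i'.
  + by move=> [a b] _; rewrite phi2_i phi2_i'.
  + move=> y [Ho [H1' H2']]; split => //. exact: phi2_psi.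
  + apply: (hs_ext _ _ Hsc) => // -[a b] [[Ea Ha] [Eb Hb]] /=.
    rewrite /Aterm phi2_i phi2_i' ind_T; last by move=> j ? ?; rewrite phi2_o.
    rewrite Ha Hb !eqxx /=.
    rewrite (prodQ1 _ i) (Q1Q2 _ i) phi2_i phi2_i' (@Q2_ext x (phi2 x i (a, b)) i); last by move=> j ? ?; apply phi2_o.
    simpl; field; split; lra.
Qed.

Lemma in_B N (x : net_state L) i Z s3 : Omega E N x -> 0 < Z ->
  has_sum (Vzero E i (x i)) (fun z => q0 i z (x i) * pi i z) s3 ->
  has_sum (fun y => Omega E N y /\ y <> x) (fun y => prod_measure pi y / Z * Bterm y x i)
     ((s3 - q0 i (x i) (x i) * pi i (x i)) * Q1 x i / Z).
Proof. move=> [Ex Hsum] HZ Hr.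
have Hrm := hs_remove (x0 := x i) (conj (Ex i) erefl) Hr.
have Hsc := hs_scale (c := Q1 x i / Z) Hrm.
set T := fun y : net_state L => (forall j, j <> i -> y j = x j) /\
     Vzero E i (x i) (y i) /\ y i <> x i.
apply: (hs_restrict (S' := T)).
- move=> y [Ho [[Ey1 Hy1] Hne]]. split; first split.
  + move=> j. case: (eqVneq j i) => [->//|/eqP h1']. rewrite Ho //.
  + rewrite -Hsum. apply: (@count1 _ _ i) => [j ?|]; first by rewrite Ho. done.
  + move=> E'; apply Hne; by rewrite E'.
- move=> y [[Ey _] Hne] HT. rewrite /Bterm.
  case: (classic (forall j, j <> i -> x j = y j)) => Ho; last by rewrite ind_F //; ring.
  case: ifP => [/eqP c1|_]; last by ring.
  have Ho' : forall j, j <> i -> y j = x j by move=> j hj; rewrite Ho.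
  exfalso; apply HT; split => //; split; first by split.
  move=> E'; apply Hne; apply functional_extensionality => j; case: (eqVneq j i) => [->//|/eqP hj]; exact: Ho'.
- have -> : (s3 - q0 i (x i) (x i) * pi i (x i)) * Q1 x i / Z =
     Q1 x i / Z * (s3 - q0 i (x i) (x i) * pi i (x i)) by field; lra.
  apply: (@hs_bij _ _ (fun a => Vzero E i (x i) a /\ a <> x i) T (upd x i) (fun y => y i)).
  + move=> a [Ha Hne]; split; [move=> j; exact: upd_o|]. by rewrite upd_i.
  + by move=> a _; rewrite upd_i.
  + move=> y [Ho [H1 H2]]; split => //. exact: upd_psi.
  + apply: (hs_ext _ _ Hsc) => // a [[Ea Ha] Hne] /=.
    rewrite /Bterm upd_i ind_T; last by move=> j ?; rewrite upd_o.
    rewrite Ha !eqxx /=.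
    rewrite (prodQ1 _ i) upd_i (@Q1_ext x (upd x i a) i); last by move=> j ?; apply upd_o.
    field; lra.
Qed.

Lemma main_sec
  (Hfinite : forall i z, E i z -> exists r, has_sum (Vzero E i z) (q0 i z) r)
  (HPB1 : forall i zi, E i zi ->
     has_sum (Vplus E i zi) (fun z => z.2 * pminus i z zi * pi i z) (lam * pi i zi))
  (HPB2 : forall i zi, E i zi ->
     exists s1 s2 s3 : R,
       has_sum (Vzero E i zi) (fun z => q0 i zi z * pi i zi) s1 /\
       has_sum (Vminus E i zi) (fun z => lam * pplus i z zi * pi i z) s2 /\
       has_sum (Vzero E i zi) (fun z => q0 i z zi * pi i z) s3 /\
       zi.2 * pi i zi + s1 = s2 + s3)
  N Z : has_sum (Omega E N) (prod_measure pi) Z -> 0 < Z ->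
    stationary_distribution (Omega E N) (q_net pplus pminus q0)
      (fun x => prod_measure pi x / Z).
Proof. move=> HZs HZ. split; last split.
- move=> x [Ex _]. apply Rmult_le_pos; last by left; apply Rinv_0_lt_compat.
  rewrite /prod_measure. apply: (big_ind (fun v => 0 <= v)); first lra.
  + move=> a b ? ?; exact: Rmult_le_pos.
  + move=> j _; exact: Hpi0.
- have H := hs_scale (c := / Z) HZs. rewrite Rinv_l in H; last lra.
  apply: (hs_ext _ _ H) => // x _; rewrite /Rdiv; ring.
- move=> x Hx. have Ex := proj1 Hx.
  have [rf Hrf] := fchoice (fun i r => has_sum (Vzero E i (x i)) (q0 i (x i)) r)
     (fun i => Hfinite i (x i) (Ex i)).
  have Hex : forall i, exists t : R * R * R,
     has_sum (Vzero E i (x i)) (fun z => q0 i (x i) z * pi i (x i)) t.1.1 /\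
     has_sum (Vminus E i (x i)) (fun z => lam * pplus i z (x i) * pi i z) t.1.2 /\
     has_sum (Vzero E i (x i)) (fun z => q0 i z (x i) * pi i z) t.2 /\
     (x i).2 * pi i (x i) + t.1.1 = t.1.2 + t.2.
    move=> i. have [s1 [s2 [s3 H]]] := HPB2 i (x i) (Ex i). by exists (s1, s2, s3).
  have [sf Hsf] := @fchoice _ _ _ Hex.
  exists (\big[Rplus/0]_(i < L) (x i).2 + \big[Rplus/0]_(i < L) (rf i - q0 i (x i) (x i))).
  split.
  + apply: (hs_ext _ _ (hs_add
       (hs_bigsum _ (index_enum 'I_L) (fun i y => Aterm x y i) _ (fun i => out_A N x i Hx))
       (hs_bigsum _ (index_enum 'I_L) (fun i y => Bterm x y i) _ (fun i => out_B N x i (rf i) Hx (Hrf i))))) => // y _.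
  + set vA := fun i => pi i (x i) * (sf (ordS i)).1.2 * Q2 x i / Z.
    set vB := fun i => ((sf i).2 - q0 i (x i) (x i) * pi i (x i)) * Q1 x i / Z.
    have HA := hs_bigsum _ (index_enum 'I_L) (fun i y => prod_measure pi y / Z * Aterm y x i) vA
       (fun i => in_A N x i Z _ Hx HZ (HPB1 i (x i) (Ex i)) (proj1 (proj2 (Hsf (ordS i))))).
    have HB := hs_bigsum _ (index_enum 'I_L) (fun i y => prod_measure pi y / Z * Bterm y x i) vB
       (fun i => in_B N x i Z _ Hx HZ (proj1 (proj2 (proj2 (Hsf i))))).
    suff Hval : \big[Rplus/0]_(i < L) vA i + \big[Rplus/0]_(i < L) vB i =
       prod_measure pi x / Z * (\big[Rplus/0]_(i < L) (x i).2 +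
                                \big[Rplus/0]_(i < L) (rf i - q0 i (x i) (x i))).
      rewrite -Hval. apply: (hs_ext _ _ (hs_add HA HB)) => // y _.
      by rewrite q_net_eq Rmult_plus_distr_l !sumR_scale.
    have E1 : \big[Rplus/0]_(i < L) vA i = \big[Rplus/0]_(i < L) ((sf i).1.2 * Q1 x i / Z).
      rewrite [RHS](reindex_inj (@ordS_inj L)) /=. apply eq_bigr => i _.
      rewrite /vA Q1S. field; lra.
    rewrite E1 -big_split Rmult_plus_distr_l !sumR_scale -big_split /=.
    apply eq_bigr => k _. rewrite /vB (prodQ1 x k).
    have [H1 [_ [_ Heq]]] := Hsf k.
    have Hs1 : (sf k).1.1 = pi k (x k) * rf k.
      apply: (hs_unique H1). apply: (hs_ext _ _ (hs_scale (c := pi k (x k)) (Hrf k))) => // z _.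
      ring.
    have -> : (sf k).1.2 = (x k).2 * pi k (x k) + pi k (x k) * rf k - (sf k).2 by lra.
    field; lra.
Qed.

End Main.
Theorem mainTheorem1
  (L : nat) (HL : (2 <= L)%N)
  (E : 'I_L -> nat * R -> Prop)
  (HEcount : forall i, countable_set (E i))
  (HEmu : forall i z, E i z -> 0 <= z.2 /\ (z.1 = 0%N -> z.2 = 0))
  (pplus pminus q0 : 'I_L -> nat * R -> nat * R -> R)
  (Hpplus : forall i z, E i z ->
     (forall z', Vplus E i z z' -> 0 <= pplus i z z') /\
     has_sum (Vplus E i z) (pplus i z) 1)
  (Hpminus : forall i z, E i z -> (1 <= z.1)%N ->
     (forall z', Vminus E i z z' -> 0 <= pminus i z z') /\
     has_sum (Vminus E i z) (pminus i z) 1)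
  (Hq0 : forall i z z', E i z -> Vzero E i z z' -> 0 <= q0 i z z')
  (Hfinite : forall i z, E i z -> exists r, has_sum (Vzero E i z) (q0 i z) r)
  (lam : R) (Hlam : 0 < lam)
  (pi : 'I_L -> nat * R -> R)
  (Hpi : forall i, stationary_distribution (E i) (q_iso pplus pminus q0 lam i) (pi i))
  (HPB1 : forall i zi, E i zi ->
     has_sum (Vplus E i zi) (fun z => z.2 * pminus i z zi * pi i z) (lam * pi i zi))
  (HPB2 : forall i zi, E i zi ->
     exists s1 s2 s3 : R,
       has_sum (Vzero E i zi) (fun z => q0 i zi z * pi i zi) s1 /\
       has_sum (Vminus E i zi) (fun z => lam * pplus i z zi * pi i z) s2 /\
       has_sum (Vzero E i zi) (fun z => q0 i z zi * pi i z) s3 /\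
       zi.2 * pi i zi + s1 = s2 + s3) :
  forall (N : nat) (Z : R),
    has_sum (Omega E N) (prod_measure pi) Z -> 0 < Z ->
    stationary_distribution (Omega E N) (q_net pplus pminus q0)
      (fun x => prod_measure pi x / Z).
Proof.
move=> N Z HZs HZ.
have Hpi0 : forall i z, E i z -> 0 <= pi i z := fun i z Hz => proj1 (Hpi i) z Hz.
eapply main_sec with (lam := lam); eassumption.
Qed.
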